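(* For a monoid $S$ the following are equivalent: (1) every almost pure $S$-act is absolutely pure; (2) for every $S$-act $A$, the $S$-act $A(1)$ is absolutely pure; (3) for every $S$-act $A$ which is a finitely generated subact of a finitely presented $S$-act, $A(1)$ is absolutely pure; (4) for every $S$-act $A$, $A(1)$ is a retract of $A(\aleph_0)$; (5) for every $S$-act $A$ which is a finitely generated subact of a finitely presented $S$-act, $A(1)$ is a retract of $A(\aleph_0)$.
   Context: A (right) $S$-act is a set with an action $(a,s)\mapsto as$ with $a1=a$, $a(st)=(as)t$. An $S$-act is finitely generated if it is a union of finitely many subacts $aS$, and finitely presented if it is isomorphic to $F_S(X)/\rho$ with $F_S(X)$ the free $S$-act on a finite set $X$ and $\rho$ a finitely generated congruence. Equations over $A$ have the forms $xs=yt$, $xs=xt$, $xs=a$ ($a\in A$); a set of them is consistent if it has a solution in some $S$-act containing $A$. $A$ is almost pure if every finite consistent set of equations over $A$ in one variable has a solution in $A$, absolutely pure if every finite consistent set of equations over $A$ has a solution in $A$; a subact $C\subseteq D$ is a retract of $D$ if some $S$-morphism $D\to C$ fixes $C$ pointwise. For a set $\Sigma$ of equations, $v(\Sigma)$ is the number of variables occurring, $H(\Sigma)=\{(xu,yv):xu=yv\in\Sigma\}$, $K(\Sigma)=\{(xs,a):xs=a\in\Sigma\}$. For an $S$-act $C$: $\Theta(C,m)$ is the collection of all finite consistent sets $\Sigma$ over $C$ with $v(\Sigma)=m$, variables chosen so that distinct sets and distinct stages of the construction use pairwise disjoint fresh variables; $\Omega_n$ is the set of variables of members of $\bigcup_{m\le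 n}\Theta(C,m)$, $\Omega_{\aleph_0}=\bigcup_n\Omega_n$; $C^n_1=(C\sqcup F_S(\Omega_n))/\kappa(n)$ where $\kappa(n)$ is the congruence generated by $\bigcup\{H(\Sigma)\cup K(\Sigma):\Sigma\in\Theta(C,m),m\le n\}$, and $C^{\aleph_0}_1$ likewise using all $m$; $C$ embeds in these via $c\mapsto[c]$. Set $A^n_0=A^{\aleph_0}_0=A$, $A^n_i=(A^n_{i-1})^n_1$, $A^{\aleph_0}_i=(A^{\aleph_0}_{i-1})^{\aleph_0}_1$, $A(n)=\bigcup_iA^n_i$, $A(\aleph_0)=\bigcup_iA^{\aleph_0}_i$. With the compatible choice of variables, $A(1)\subseteq A(\aleph_0)$ as a subact (indeed $A(\aleph_0)$ is obtained from $A(1)$ by successively adjoining solutions of finite consistent systems). *)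

(* Defs.v *)
From Stdlib Require Import ClassicalEpsilon List PeanoNat.
Set Implicit Arguments.
Unset Strict Implicit.

Record monoid := Monoid {
  mcar :> Type;
  mmul : mcar -> mcar -> mcar;
  mone : mcar;
  massoc : forall a b c, mmul a (mmul b c) = mmul (mmul a b) c;
  mone_l : forall a, mmul mone a = a;
  mone_r : forall a, mmul a mone = a }.
Arguments mmul : clear implicits.
Arguments mone : clear implicits.

Record preact (M : monoid) := PreAct {
  acar :> Type;
  aact : acar -> M -> acar }.
Arguments PreAct {M} acar aact.
Arguments aact {M} _ _ _.

Definition is_act (M : monoid) (A : preact M) : Prop :=
  (forall a, aact A a (mone M) = a) /\
  (forall a s t, aact A a (mmul M s t) = aact A (aact A a s) t).

Definition is_morph (M : monoid) (A B : preact M) (f : A -> B) : Prop :=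
  forall a s, f (aact A a s) = aact B (f a) s.

Definition injective (X Y : Type) (f : X -> Y) : Prop :=
  forall a b, f a = f b -> a = b.

Inductive eqn (M : monoid) (V C : Type) : Type :=
  | EqVV (x : V) (s : M) (y : V) (t : M)
  | EqVC (x : V) (s : M) (c : C).
Arguments EqVV {M V C} x s y t.
Arguments EqVC {M V C} x s c.

Definition system (M : monoid) (V C : Type) := eqn M V C -> Prop.

Definition finite_sys (M : monoid) (V C : Type) (Sg : system M V C) : Prop :=
  exists l : list (eqn M V C), forall q, Sg q <-> In q l.

Definition sat_eqn (M : monoid) (V : Type) (C D : preact M) (e : C -> D)
  (f : V -> D) (q : eqn M V C) : Prop :=
  match q with
  | EqVV x s y t => aact D (f x) s = aact D (f y) t
  | EqVC x s c => aact D (f x) s = e c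
  end.

Definition solves (M : monoid) (V : Type) (C D : preact M) (e : C -> D)
  (f : V -> D) (Sg : system M V C) : Prop :=
  forall q, Sg q -> sat_eqn e f q.

Definition consistent (M : monoid) (V : Type) (C : preact M)
  (Sg : system M V C) : Prop :=
  exists D : preact M, is_act D /\
  exists e : C -> D, injective e /\ is_morph e /\
  exists f : V -> D, solves e f Sg.

Definition almost_pure (M : monoid) (C : preact M) : Prop :=
  forall Sg : system M unit C, finite_sys Sg -> consistent Sg ->
  exists f : unit -> C, solves (fun c => c) f Sg.

Definition abs_pure (M : monoid) (C : preact M) : Prop :=
  forall Sg : system M nat C, finite_sys Sg -> consistent Sg ->
  exists f : nat -> C, solves (fun c => c) f Sg.

Definition fin_gen (M : monoid) (C : preact M) : Prop :=
  exists l : list C, forall c, exists g s, In g l /\ c = aact C g s.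

Inductive cg (M : monoid) (X : preact M) (R : X -> X -> Prop) : X -> X -> Prop :=
  | cg_base x y s : R x y -> cg R (aact X x s) (aact X y s)
  | cg_refl x : cg R x x
  | cg_sym x y : cg R x y -> cg R y x
  | cg_trans x y z : cg R x y -> cg R y z -> cg R x z.

Definition free_fin (M : monoid) (n : nat) : preact M :=
  PreAct ({i : nat | i < n} * M)%type (fun p s => (fst p, mmul M (snd p) s)).

(** Finitely presented: P is isomorphic to F_S(X)/rho, X finite and rho generated
    by a finite set of pairs; expressed as: the morphism F_S(X) -> P,
    (i,u) |-> g_i u, is onto and its kernel is exactly rho. *)
Definition fin_pres (M : monoid) (P : preact M) : Prop :=
  exists (n : nat) (g : {i : nat | i < n} -> P)
         (R : list (free_fin M n * free_fin M n)),
    let pi := fun x : free_fin M n => aact P (g (fst x)) (snd x) in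
    (forall p, exists x, p = pi x) /\
    (forall x y, pi x = pi y <-> cg (fun a b => In (a, b) R) x y).

Definition fg_sub_fp (M : monoid) (A : preact M) : Prop :=
  fin_gen A /\
  exists P : preact M, is_act P /\ fin_pres P /\
  exists e : A -> P, injective e /\ is_morph e.

Definition Quot (X : Type) (E : X -> X -> Prop) :=
  { P : X -> Prop | exists x, P = E x }.
Definition qcls (X : Type) (E : X -> X -> Prop) (x : X) : Quot E :=
  exist _ (E x) (ex_intro _ x eq_refl).
Definition qrep (X : Type) (E : X -> X -> Prop) (P : Quot E) : X :=
  proj1_sig (constructive_indefinite_description _ (proj2_sig P)).
Definition quot_preact (M : monoid) (X : preact M) (E : X -> X -> Prop)
  : preact M :=
  PreAct (Quot E) (fun P s => qcls E (aact X (qrep P) s)).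

Definition occurs (M : monoid) (C : Type) (x : nat) (q : eqn M nat C) : Prop :=
  match q with
  | EqVV y _ z _ => x = y \/ x = z
  | EqVC y _ _ => x = y
  end.
Definition occurs_in (M : monoid) (C : Type) (x : nat) (Sg : system M nat C) :=
  exists q, Sg q /\ occurs x q.

(** Bound on the number of variables: [Some n] = at most n, [None] = aleph_0.
    Systems are taken with variable set exactly {0,...,m-1}, m = v(Sg). *)
Definition admissible (M : monoid) (C : Type) (n : option nat)
  (Sg : system M nat C) : Prop :=
  exists m, match n with None => True | Some k => m <= k end /\
            (forall x, occurs_in x Sg <-> x < m).

(** Generators of F_S(Omega_n): pairs (Sigma, variable of Sigma), Sigma a finite
    consistent system over C with v(Sigma) <= n. *)
Definition Gen (M : monoid) (n : option nat) (C : preact M) :=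
  { p : system M nat C * nat |
      finite_sys (fst p) /\ consistent (fst p) /\ admissible n (fst p) /\
      occurs_in (snd p) (fst p) }.

Definition pre (M : monoid) (n : option nat) (C : preact M) : preact M :=
  PreAct (C + (Gen n C * M))%type
   (fun u s => match u with
               | inl c => inl (aact C c s)
               | inr (g, v) => inr (g, mmul M v s)
               end).

Inductive kbase (M : monoid) (n : option nat) (C : preact M)
  : pre n C -> pre n C -> Prop :=
  | kb_VV (g1 g2 : Gen n C) s t :
      fst (proj1_sig g1) = fst (proj1_sig g2) ->
      fst (proj1_sig g1) (EqVV (snd (proj1_sig g1)) s (snd (proj1_sig g2)) t) ->
      kbase (inr (g1, s)) (inr (g2, t))
  | kb_VC (g : Gen n C) s c :
      fst (proj1_sig g) (EqVC (snd (proj1_sig g)) s c) ->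
      kbase (inr (g, s)) (inl c).

Definition step (M : monoid) (n : option nat) (C : preact M) : preact M :=
  quot_preact (cg (@kbase M n C)).
Definition step_emb (M : monoid) (n : option nat) (C : preact M) (c : C)
  : step n C := qcls _ (inl c : pre n C).

Fixpoint stage (M : monoid) (n : option nat) (A : preact M) (i : nat)
  : preact M :=
  match i with
  | 0 => A
  | S j => step n (stage n A j)
  end.

Fixpoint liftd (M : monoid) (n : option nat) (A : preact M) (i d : nat)
  : stage n A i -> stage n A (d + i) :=
  match d as d return stage n A i -> stage n A (d + i) with
  | 0 => fun a => a
  | S d' => fun a => @step_emb M n (stage n A (d' + i)) (@liftd M n A i d' a)
  end.

Definition tot (M : monoid) (n : option nat) (A : preact M) : preact M :=
  PreAct {i : nat & stage n A i}
   (fun x s => existT _ (projT1 x) (aact (stage n A (projT1 x)) (projT2 x) s)).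

Definition shift (M : monoid) (n : option nat) (A : preact M) (d : nat)
  (x : tot n A) : tot n A :=
  existT _ (d + projT1 x) (@liftd M n A (projT1 x) d (projT2 x)).

Definition Eunion (M : monoid) (n : option nat) (A : preact M)
  (x y : tot n A) : Prop :=
  exists d1 d2, shift d1 x = shift d2 y.

(** A(n) = union of the chain A^n_0 <= A^n_1 <= ... (directed colimit). *)
Definition Aclos (M : monoid) (n : option nat) (A : preact M) : preact M :=
  quot_preact (@Eunion M n A).

Definition A1 (M : monoid) (A : preact M) := Aclos (Some 1) A.
Definition Aaleph0 (M : monoid) (A : preact M) := Aclos None A.

(** The canonical inclusion A(1) <= A(aleph_0) (compatible choice of variables),
    given by its graph, built stage by stage. *)
Definition eqn_rel (M : monoid) (C1 C2 : Type) (R : C1 -> C2 -> Prop)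
  (q : eqn M nat C1) (q' : eqn M nat C2) : Prop :=
  match q, q' with
  | EqVV x s y t, EqVV x' s' y' t' => x = x' /\ s = s' /\ y = y' /\ t = t'
  | EqVC x s c, EqVC x' s' c' => x = x' /\ s = s' /\ R c c'
  | _, _ => False
  end.

Definition Jpre (M : monoid) (C1 C2 : preact M) (R : C1 -> C2 -> Prop)
  (u : pre (Some 1) C1) (w : pre None C2) : Prop :=
  match u, w with
  | inl c, inl c' => R c c'
  | inr (g, s), inr (g', s') =>
      s = s' /\ snd (proj1_sig g) = snd (proj1_sig g') /\
      (forall q', fst (proj1_sig g') q' <->
                  exists q, fst (proj1_sig g) q /\ eqn_rel R q q')
  | _, _ => False
  end.

Fixpoint Jst (M : monoid) (A : preact M) (i : nat)
  : stage (Some 1) A i -> stage None A i -> Prop :=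
  match i as i return stage (Some 1) A i -> stage None A i -> Prop with
  | 0 => fun a b => a = b
  | S j => fun P Q =>
      exists (x : pre (Some 1) (stage (Some 1) A j))
             (y : pre None (stage None A j)),
        P = qcls _ x /\ Q = qcls _ y /\ Jpre (@Jst M A j) x y
  end.

Definition Jincl (M : monoid) (A : preact M) (x : A1 A) (y : Aaleph0 A) : Prop :=
  exists i (a : stage (Some 1) A i) (b : stage None A i),
    Jst a b /\ x = qcls _ (existT _ i a : tot (Some 1) A) /\
    y = qcls _ (existT _ i b : tot None A).

Definition A1_retract (M : monoid) (A : preact M) : Prop :=
  exists r : Aaleph0 A -> A1 A, is_morph r /\
    (forall x y, Jincl x y -> r y = x).

(* Main.v *)
Require Import Defs.
From Stdlib Require Import ClassicalEpsilon FunctionalExtensionality PropExtensionality ProofIrrelevance List PeanoNat Lia Eqdep_dec.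
Set Implicit Arguments.
Unset Strict Implicit.

Section Quots.
Variable M : monoid.

Definition equivr (X : Type) (E : X -> X -> Prop) :=
  (forall x, E x x) /\ (forall x y, E x y -> E y x) /\ (forall x y z, E x y -> E y z -> E x z).
Definition congr (X : preact M) (E : X -> X -> Prop) :=
  forall x y s, E x y -> E (aact X x s) (aact X y s).

Lemma qcls_eq (X : Type) (E : X -> X -> Prop) : equivr E -> forall x y, E x y -> qcls E x = qcls E y.
Proof.
  intros [Hr [Hs Ht]] x y H. unfold qcls.
  assert (E x = E y) as Hxy.
  { apply functional_extensionality; intro z; apply propositional_extensionality; split; eauto. }
  apply eq_sig_hprop; [intros; apply proof_irrelevance|]. simpl. exact Hxy.
Qed.

Lemma qcls_inv (X : Type) (E : X -> X -> Prop) : equivr E -> forall x y, qcls E x = qcls E y -> E x y.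
Proof.
  intros [Hr _] x y H. apply (f_equal (@proj1_sig _ _)) in H. simpl in H.
  rewrite H. apply Hr.
Qed.

Lemma qcls_qrep (X : Type) (E : X -> X -> Prop) (P : Quot E) : qcls E (qrep P) = P.
Proof.
  destruct P as [p H]. unfold qcls, qrep; simpl.
  destruct (constructive_indefinite_description _ H) as [x Hx]; simpl. subst p.
  f_equal. apply proof_irrelevance.
Qed.

Lemma qrep_qcls (X : Type) (E : X -> X -> Prop) : equivr E -> forall x, E (qrep (qcls E x)) x.
Proof.
  intros HE x. apply qcls_inv; auto. apply qcls_qrep.
Qed.

Lemma quot_ind (X : Type) (E : X -> X -> Prop) (Pr : Quot E -> Prop) :
  (forall x, Pr (qcls E x)) -> forall P, Pr P.
Proof. intros H P. rewrite <- (qcls_qrep P). apply H. Qed.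

Lemma quot_act (X : preact M) (E : X -> X -> Prop) : equivr E -> congr E ->
  forall x s, aact (quot_preact E) (qcls E x) s = qcls E (aact X x s).
Proof.
  intros HE HC x s. simpl. apply qcls_eq; auto. apply HC. apply qrep_qcls; auto.
Qed.

Lemma quot_is_act (X : preact M) (E : X -> X -> Prop) : equivr E -> congr E -> is_act X ->
  is_act (quot_preact E).
Proof.
  intros HE HC [H1 H2]. split.
  - intro P. pattern P; apply quot_ind; intro x. rewrite quot_act; auto. rewrite H1; auto.
  - intros P s t. pattern P; apply quot_ind; intro x.
    rewrite !quot_act; auto. rewrite H2; auto.
Qed.

Lemma qcls_morph (X : preact M) (E : X -> X -> Prop) : equivr E -> congr E ->
  is_morph (A := X) (B := quot_preact E) (fun x => qcls E x).
Proof. intros HE HC x s. rewrite quot_act; auto. Qed.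

Definition qlift (X : Type) (E : X -> X -> Prop) (Y : Type) (f : X -> Y) (P : Quot E) : Y := f (qrep P).

Lemma qlift_qcls (X : Type) (E : X -> X -> Prop) (Y : Type) (f : X -> Y) :
  equivr E -> (forall x y, E x y -> f x = f y) -> forall x, qlift f (qcls E x) = f x.
Proof. intros HE Hf x. unfold qlift. apply Hf. apply qrep_qcls; auto. Qed.

Lemma qlift_morph (X : preact M) (E : X -> X -> Prop) (Y : preact M) (f : X -> Y) :
  equivr E -> congr E -> (forall x y, E x y -> f x = f y) -> is_morph f ->
  is_morph (A := quot_preact E) (qlift f).
Proof.
  intros HE HC Hf Hm P s. pattern P; apply quot_ind; intro x.
  rewrite quot_act; auto. rewrite !qlift_qcls; auto.
Qed.

Lemma cg_equiv (X : preact M) (R : X -> X -> Prop) : equivr (cg R).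
Proof. split; [|split]; intros; eauto using cg_refl, cg_sym, cg_trans. Qed.

Lemma cg_congr (X : preact M) (R : X -> X -> Prop) : is_act X -> congr (cg R).
Proof.
  intros [H1 H2] x y s H. induction H.
  - rewrite <- !H2. apply cg_base; auto.
  - apply cg_refl.
  - apply cg_sym; auto.
  - eapply cg_trans; eauto.
Qed.

Lemma cg_of (X : preact M) (R : X -> X -> Prop) : is_act X -> forall x y, R x y -> cg R x y.
Proof.
  intros [H1 H2] x y H. rewrite <- (H1 x), <- (H1 y). apply cg_base; auto.
Qed.

Lemma cg_map (X Y : preact M) (R : X -> X -> Prop) (R' : Y -> Y -> Prop) (f : X -> Y) :
  is_act Y -> is_morph f -> (forall x y, R x y -> cg R' (f x) (f y)) ->
  forall x y, cg R x y -> cg R' (f x) (f y).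
Proof.
  intros HY Hf HR x y H. induction H.
  - rewrite !Hf. apply cg_congr; auto.
  - apply cg_refl.
  - apply cg_sym; auto.
  - eapply cg_trans; eauto.
Qed.

Lemma cg_resp (X : preact M) (R : X -> X -> Prop) (Y : preact M) (f : X -> Y) :
  is_morph f -> (forall x y, R x y -> f x = f y) -> forall x y, cg R x y -> f x = f y.
Proof.
  intros Hf HR x y H. induction H.
  - rewrite !Hf. f_equal; auto.
  - reflexivity.
  - auto.
  - congruence.
Qed.

End Quots.

Section Steps.
Variable M : monoid.

Lemma pre_act (n : option nat) (C : preact M) : is_act C -> is_act (pre n C).
Proof.
  intros [H1 H2]. split.
  - intros [c|[g v]]; simpl; [rewrite H1|rewrite mone_r]; auto.
  - intros [c|[g v]] s t; simpl; [rewrite H2|rewrite massoc]; auto.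
Qed.

Lemma kequiv (n : option nat) (C : preact M) : equivr (cg (@kbase M n C)).
Proof. apply cg_equiv. Qed.

Lemma kcongr (n : option nat) (C : preact M) : is_act C -> congr (cg (@kbase M n C)).
Proof. intro; apply cg_congr, pre_act; auto. Qed.

Lemma step_act (n : option nat) (C : preact M) : is_act C -> is_act (step n C).
Proof. intro H. apply quot_is_act; auto using kequiv, kcongr, pre_act. Qed.

Lemma step_qact (n : option nat) (C : preact M) : is_act C -> forall u s,
  aact (step n C) (qcls _ u) s = qcls _ (aact (pre n C) u s).
Proof. intros H u s. apply quot_act; auto using kequiv, kcongr. Qed.

Lemma step_emb_morph (n : option nat) (C : preact M) : is_act C -> is_morph (@step_emb M n C).
Proof. intros H c s. unfold step_emb. rewrite step_qact; auto. Qed.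

Lemma kb_eq (n : option nat) (C : preact M) : is_act C -> forall u v,
  kbase u v -> qcls (cg (@kbase M n C)) u = qcls _ v.
Proof. intros H u v Hk. apply qcls_eq. apply kequiv. apply cg_of; auto using pre_act. Qed.

Variable n : option nat.
Variable A : preact M.
Hypothesis HA : is_act A.

Lemma stage_act j : is_act (stage n A j).
Proof. induction j; simpl; auto using step_act. Qed.

Lemma liftd_act i d (a : stage n A i) s :
  liftd d (aact _ a s) = aact _ (liftd d a) s.
Proof.
  induction d; simpl; auto. rewrite IHd. apply step_emb_morph, stage_act.
Qed.

Lemma existT_S (F : forall k, stage n A k -> stage n A (S k)) k k' v v' :
  existT (fun k => stage n A k) k v = existT _ k' v' ->
  existT (fun k => stage n A k) (S k) (F k v) = existT _ (S k') (F k' v').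
Proof.
  intro H. exact (f_equal (fun p => existT (fun k => stage n A k) (S (projT1 p)) (F _ (projT2 p))) H).
Qed.

Lemma shift_shift a b (x : tot n A) : shift a (shift b x) = shift (a + b) x.
Proof.
  destruct x as [i u]. unfold shift; simpl.
  induction a; simpl; auto.
  apply (existT_S (fun k v => @step_emb M n (stage n A k) v)). exact IHa.
Qed.

Lemma shift0 (x : tot n A) : shift 0 x = x.
Proof. destruct x; reflexivity. Qed.

Lemma Eequiv : equivr (@Eunion M n A).
Proof.
  split; [|split].
  - intro x. exists 0, 0. reflexivity.
  - intros x y [d1 [d2 H]]. exists d2, d1. auto.
  - intros x y z [d1 [d2 H1]] [d3 [d4 H2]]. exists (d3 + d1), (d2 + d4).
    rewrite <- shift_shift, H1, shift_shift, Nat.add_comm, <- shift_shift, H2, shift_shift.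
    reflexivity.
Qed.

Lemma shift_act d (x : tot n A) s : shift d (aact (tot n A) x s) = aact (tot n A) (shift d x) s.
Proof.
  destruct x as [i a]. unfold shift; simpl. rewrite liftd_act. reflexivity.
Qed.

Lemma Econgr : congr (@Eunion M n A).
Proof.
  intros x y s [d1 [d2 H]]. exists d1, d2. rewrite !shift_act, H. reflexivity.
Qed.

Lemma tot_act : is_act (tot n A).
Proof.
  split.
  - intros [i a]. simpl. destruct (stage_act i) as [H1 _]. rewrite H1. reflexivity.
  - intros [i a] s t. simpl. destruct (stage_act i) as [_ H2]. rewrite H2. reflexivity.
Qed.

Lemma Aclos_act : is_act (Aclos n A).
Proof. apply quot_is_act; auto using Eequiv, Econgr, tot_act. Qed.

Definition emb j (a : stage n A j) : Aclos n A :=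
  qcls (@Eunion M n A) (existT (fun k => stage n A k) j a).

Lemma emb_morph j : is_morph (@emb j).
Proof.
  intros a s. unfold emb, Aclos. rewrite quot_act; auto using Eequiv, Econgr.
Qed.

Lemma emb_shift i d (a : stage n A i) : emb (liftd d a) = emb a.
Proof.
  unfold emb. apply qcls_eq. apply Eequiv. exists 0, d. reflexivity.
Qed.

Lemma emb_S j (a : stage n A j) : emb (j := S j) (step_emb n a) = emb a.
Proof. apply (emb_shift 1 a). Qed.

Lemma Aclos_surj (P : Aclos n A) : exists j a, P = emb (j := j) a.
Proof.
  rewrite <- (qcls_qrep P). destruct (qrep P) as [j a]. exists j, a. reflexivity.
Qed.

Lemma emb_at (P : Aclos n A) : exists i, forall N, i <= N -> exists b : stage n A N, P = emb b.
Proof.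
  destruct (Aclos_surj P) as [i [a ->]]. exists i. intros N HN.
  destruct (Nat.le_exists_sub i N HN) as [d [-> _]].
  exists (liftd d a). symmetry; apply emb_shift.
Qed.

End Steps.

Section Systems.
Variable M : monoid.

Definition emap (V1 V2 : Type) (C1 C2 : Type) (rho : V1 -> V2) (h : C1 -> C2)
  (q : eqn M V1 C1) : eqn M V2 C2 :=
  match q with
  | EqVV x s y t => EqVV (rho x) s (rho y) t
  | EqVC x s c => EqVC (rho x) s (h c)
  end.

Definition sysmap (V1 V2 : Type) (C1 C2 : Type) (rho : V1 -> V2) (h : C1 -> C2)
  (Sg : system M V1 C1) : system M V2 C2 :=
  fun q' => exists q, Sg q /\ q' = emap rho h q.

Lemma sat_emap (V1 V2 : Type) (C1 C2 D : preact M) (rho : V1 -> V2) (h : C1 -> C2)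
  (e : C2 -> D) (f : V2 -> D) q :
  sat_eqn e f (emap rho h q) <-> sat_eqn (fun c => e (h c)) (fun x => f (rho x)) q.
Proof. destruct q; simpl; tauto. Qed.

Lemma solves_sysmap (V1 V2 : Type) (C1 C2 D : preact M) (rho : V1 -> V2) (h : C1 -> C2)
  (e : C2 -> D) (f : V2 -> D) Sg :
  solves e f (sysmap rho h Sg) <-> solves (fun c => e (h c)) (fun x => f (rho x)) Sg.
Proof.
  split.
  - intros H q Hq. apply sat_emap. apply H. exists q; auto.
  - intros H q' [q [Hq ->]]. apply sat_emap. auto.
Qed.

Lemma sm1 (V1 V2 : Type) (C1 C2 D : preact M) (rho : V1 -> V2) (h : C1 -> C2)
  (e : C2 -> D) (f : V2 -> D) Sg :
  solves e f (sysmap rho h Sg) -> solves (fun c => e (h c)) (fun x => f (rho x)) Sg.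
Proof. apply solves_sysmap. Qed.
Lemma sm2 (V1 V2 : Type) (C1 C2 D : preact M) (rho : V1 -> V2) (h : C1 -> C2)
  (e : C2 -> D) (f : V2 -> D) Sg :
  solves (fun c => e (h c)) (fun x => f (rho x)) Sg -> solves e f (sysmap rho h Sg).
Proof. apply solves_sysmap. Qed.

Lemma finite_sysmap (V1 V2 : Type) (C1 C2 : Type) (rho : V1 -> V2) (h : C1 -> C2)
  (Sg : system M V1 C1) : finite_sys Sg -> finite_sys (sysmap rho h Sg).
Proof.
  intros [l Hl]. exists (map (emap rho h) l). intro q'. rewrite in_map_iff. split.
  - intros [q [Hq ->]]. exists q; split; auto. apply Hl; auto.
  - intros [q [<- Hq]]. exists q; split; auto. apply Hl; auto.
Qed.

Lemma solves_morph (V : Type) (C D D' : preact M) (e : C -> D) (g : D -> D') (f : V -> D) Sg :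
  is_morph g -> solves e f Sg -> solves (fun c => g (e c)) (fun x => g (f x)) Sg.
Proof.
  intros Hg H q Hq. specialize (H q Hq). destruct q; simpl in *; rewrite <- !Hg; congruence.
Qed.

Lemma occurs_emap (C1 C2 : Type) (h : C1 -> C2) x (q : eqn M nat C1) :
  occurs x (emap (fun y => y) h q) <-> occurs x q.
Proof. destruct q; simpl; tauto. Qed.

Lemma occurs_in_sysmap (C1 C2 : Type) (h : C1 -> C2) x (Sg : system M nat C1) :
  occurs_in x (sysmap (fun y => y) h Sg) <-> occurs_in x Sg.
Proof.
  split.
  - intros [q' [[q [Hq ->]] Ho]]. exists q; split; auto. apply occurs_emap in Ho; auto.
  - intros [q [Hq Ho]]. exists (emap (fun y => y) h q). split. exists q; auto. apply occurs_emap; auto.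
Qed.

Lemma sat_ext (C D : preact M) (e : C -> D) (f f' : nat -> D) (q : eqn M nat C) :
  (forall x, occurs x q -> f x = f' x) -> sat_eqn e f q -> sat_eqn e f' q.
Proof. intro H. destruct q; simpl in *; rewrite <- ?H; auto. Qed.

Section T1.
Variables (V : Type) (C C' D : preact M) (h : C -> C') (e : C -> D).
Hypotheses (HC' : is_act C') (HD : is_act D) (Hh : is_morph h) (He : injective e) (Hem : is_morph e).

Definition Dsub := {d : D | ~ exists c, e c = d}.

Definition psi (d : D) : C' + Dsub :=
  match excluded_middle_informative (exists c, e c = d) with
  | left H => inl (h (proj1_sig (constructive_indefinite_description _ H)))
  | right H => inr (exist _ d H)
  end.

Definition Dpush : preact M := PreAct (C' + Dsub)%type
  (fun u s => match u with inl c => inl (aact C' c s) | inr d => psi (aact D (proj1_sig d) s) end).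

Lemma psi_e c : psi (e c) = inl (h c).
Proof.
  unfold psi. destruct (excluded_middle_informative _) as [H|H].
  - destruct (constructive_indefinite_description _ H) as [c' Hc']; simpl. apply He in Hc'. subst; auto.
  - exfalso; apply H; eauto.
Qed.

Lemma psi_ne d (H : ~ exists c, e c = d) : psi d = inr (exist _ d H).
Proof.
  unfold psi. destruct (excluded_middle_informative _) as [H'|H'].
  - contradiction.
  - f_equal. f_equal. apply proof_irrelevance.
Qed.

Lemma psi_morph : is_morph (B := Dpush) psi.
Proof.
  intros d s. destruct (classic (exists c, e c = d)) as [[c <-]|H].
  - rewrite <- Hem, !psi_e. simpl. rewrite Hh. reflexivity.
  - rewrite (psi_ne H). reflexivity.
Qed.

Lemma Dpush_act : is_act Dpush.
Proof.
  destruct HC' as [H1 H2]. destruct HD as [D1 D2]. split.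
  - intros [c|[d H]]; simpl. rewrite H1; auto. rewrite D1. apply psi_ne.
  - intros [c|[d H]] s t; simpl. rewrite H2; auto.
    rewrite D2. apply psi_morph.
Qed.

Lemma inl_inj : injective (Y := Dpush) (fun c => inl c).
Proof. intros a b H. injection H; auto. Qed.

End T1.

Lemma T1 (V : Type) (C C' : preact M) (h : C -> C') (Sg : system M V C) :
  is_act C' -> is_morph h -> consistent Sg -> consistent (sysmap (fun x => x) h Sg).
Proof.
  intros HC' Hh [D [HD [e [He [Hem [f Hf]]]]]].
  exists (Dpush h e). split. apply Dpush_act; auto.
  exists (fun c => inl c). split. apply inl_inj. split. intros c s; reflexivity.
  exists (fun x => psi h e (f x)).
  apply solves_sysmap. intros q Hq. specialize (Hf q Hq).
  assert (Hpm : is_morph (B := Dpush h e) (psi h e)) by (apply psi_morph; auto).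
  destruct q; cbv beta iota delta [sat_eqn] in *.
  - rewrite <- !Hpm. congruence.
  - rewrite <- Hpm. rewrite Hf. apply psi_e; auto.
Qed.

End Systems.

Section Inj.
Variable M : monoid.

Definition optact (C : preact M) : preact M :=
  PreAct (option C) (fun o s => match o with Some a => Some (aact C a s) | None => None end).

Lemma optact_act (C : preact M) : is_act C -> is_act (optact C).
Proof.
  intros [H1 H2]; split.
  - intros [a|]; simpl; auto. rewrite H1; auto.
  - intros [a|] s t; simpl; auto. rewrite H2; auto.
Qed.

Lemma joint (C : preact M) (HC : is_act C) (L : list (system M nat C)) :
  (forall S, In S L -> consistent S) ->
  exists (E : preact M) (e : C -> E) (sol : system M nat C -> nat -> E),
    is_act E /\ injective e /\ is_morph e /\ forall S, In S L -> solves e (sol S) S.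
Proof.
  induction L as [|S L IH]; intro Hc.
  - exists (optact C), (fun c => Some c), (fun _ _ => None). split. apply optact_act; auto.
    split. intros a b H; injection H; auto. split. intros a s; reflexivity. intros S [].
  - destruct IH as [E' [e' [sol' [HE' [He' [Hem' Hs']]]]]]. intros; apply Hc; simpl; auto.
    destruct (T1 (h := e') HE' Hem' (Hc S (or_introl eq_refl))) as [D [HD [e'' [He'' [Hem'' [f Hf]]]]]].
    exists D, (fun c => e'' (e' c)),
      (fun S0 => if excluded_middle_informative (S0 = S) then f else fun x => e'' (sol' S0 x)).
    split; auto. split. intros a b H; auto. split. intros a s. rewrite Hem', Hem''; auto.
    intros S0 HS0. destruct (excluded_middle_informative (S0 = S)) as [->|Hne].
    + exact (proj1 (solves_sysmap _ _ _ _ _) Hf).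
    + destruct HS0 as [->|HS0]. congruence.
      apply solves_morph; auto.
Qed.

Definition theta (n : option nat) (C E : preact M) (e : C -> E) (sol : system M nat C -> nat -> E)
  (u : pre n C) : E :=
  match u with
  | inl c => e c
  | inr (g, s) => aact E (sol (fst (proj1_sig g)) (snd (proj1_sig g))) s
  end.

Lemma theta_morph (n : option nat) (C E : preact M) (e : C -> E) sol :
  is_act E -> is_morph e -> is_morph (A := pre n C) (theta e sol).
Proof.
  intros [H1 H2] He [c|[g v]] s; simpl; auto.
Qed.

Lemma cg_theta (n : option nat) (C : preact M) (u v : pre n C) :
  cg (@kbase M n C) u v -> exists L : list (Gen n C), forall (E : preact M) (e : C -> E) sol,
    is_act E -> is_morph e ->
    (forall g, In g L -> solves e (sol (fst (proj1_sig g))) (fst (proj1_sig g))) ->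
    theta e sol u = theta e sol v.
Proof.
  intro H. induction H.
  - destruct H as [g1 g2 s1 t1 Heq Hin|g s1 c Hin].
    + exists (g1 :: nil). intros E e sol HE He Hs.
      rewrite !theta_morph; auto. f_equal.
      specialize (Hs g1 (or_introl eq_refl) _ Hin). simpl in Hs. simpl. rewrite <- Heq. exact Hs.
    + exists (g :: nil). intros E e sol HE He Hs.
      rewrite !theta_morph; auto. f_equal.
      specialize (Hs g (or_introl eq_refl) _ Hin). simpl in Hs. simpl. exact Hs.
  - exists nil. intros; reflexivity.
  - destruct IHcg as [L HL]. exists L. intros. symmetry; eauto.
  - destruct IHcg1 as [L1 HL1], IHcg2 as [L2 HL2]. exists (L1 ++ L2). intros E e sol HE He Hs.
    rewrite (HL1 E e sol); auto. apply HL2; auto.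
    intros; apply Hs, in_or_app; auto. intros; apply Hs, in_or_app; auto.
Qed.

Lemma step_emb_inj (n : option nat) (C : preact M) : is_act C -> injective (@step_emb M n C).
Proof.
  intros HC c c' H. apply qcls_inv in H; [|apply kequiv].
  destruct (cg_theta H) as [L HL].
  destruct (@joint C HC (map (fun g : Gen n C => fst (proj1_sig g)) L)) as [E [e [sol [HE [He [Hem Hs]]]]]].
  { intros S HS. apply in_map_iff in HS. destruct HS as [g [<- _]].
    destruct (proj2_sig g) as [_ [Hc _]]. exact Hc. }
  apply He. apply (HL E e sol HE Hem). intros g Hg. apply Hs. apply in_map_iff. eauto.
Qed.

Variable n : option nat.
Variable A : preact M.
Hypothesis HA : is_act A.

Lemma liftd_inj i d : injective (@liftd M n A i d).
Proof.
  induction d; simpl; intros a b H; auto.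
  apply IHd. apply step_emb_inj in H; auto. apply stage_act; auto.
Qed.

Lemma emb_inj j : injective (@emb M n A j).
Proof.
  intros a b H. unfold emb in H. apply qcls_inv in H; [|apply Eequiv; auto].
  destruct H as [d1 [d2 H]]. unfold shift in H; simpl in H.
  assert (d1 = d2) by (apply (f_equal (@projT1 _ _)) in H; simpl in H; lia). subst d2.
  apply inj_pair2_eq_dec in H; [|exact Nat.eq_dec].
  eapply liftd_inj; eauto.
Qed.

End Inj.

Section Solve.
Variable M : monoid.

Lemma image_list (T U : Type) (rel : T -> U -> Prop) (l : list T) :
  (forall t, In t l -> exists u, rel t u /\ forall u', rel t u' -> u' = u) ->
  exists l', forall u, (exists t, In t l /\ rel t u) <-> In u l'.
Proof.
  induction l as [|t l IH]; intro H.
  - exists nil. intro u; split; [intros [t [[] _]]|intros []].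
  - destruct IH as [l' Hl']. intros; apply H; simpl; auto.
    destruct (H t (or_introl eq_refl)) as [u0 [Hu0 Hun]].
    exists (u0 :: l'). intro u. simpl. split.
    + intros [t' [[<-|Ht'] Hr]]. left; symmetry; auto. right; apply Hl'; eauto.
    + intros [<-|Hu]. exists t; auto. apply Hl' in Hu. destruct Hu as [t' [? ?]]; eauto.
Qed.

Lemma eqn_rel_fun (C1 C2 : Type) (R : C1 -> C2 -> Prop) (q : eqn M nat C1) :
  (forall c, exists b, R c b /\ forall b', R c b' -> b' = b) ->
  exists q', eqn_rel R q q' /\ forall q'', eqn_rel R q q'' -> q'' = q'.
Proof.
  intro HR. destruct q as [x s y t|x s c].
  - exists (EqVV x s y t). split. simpl; auto.
    intros [x' s' y' t'|]; simpl; try tauto. intros [-> [-> [-> ->]]]; auto.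
  - destruct (HR c) as [b [Hb Hu]]. exists (EqVC x s b). split. simpl; auto.
    intros [|x' s' b']; simpl; try tauto. intros [-> [-> Hb']]. rewrite (Hu _ Hb'); auto.
Qed.

Lemma occurs_eqn_rel (C1 C2 : Type) (R : C1 -> C2 -> Prop) (q : eqn M nat C1) q' x :
  eqn_rel R q q' -> occurs x q' -> occurs x q.
Proof.
  destruct q, q'; simpl; try tauto.
  - intros [-> [-> [-> ->]]]; auto.
  - intros [-> [-> _]]; auto.
Qed.

Definition ginr (n : option nat) (C : preact M) (g : Gen n C) (s : M) : step n C :=
  qcls _ (inr (g, s) : pre n C).

Lemma ginr_act (n : option nat) (C : preact M) (g : Gen n C) u s : is_act C ->
  aact (step n C) (ginr g u) s = ginr g (mmul M u s).
Proof. intro HC. unfold ginr. rewrite step_qact; auto. Qed.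

Variable n : option nat.
Variable A : preact M.
Hypothesis HA : is_act A.

Lemma common_stage (l : list (Aclos n A)) :
  exists N, forall N', N <= N' -> forall c, In c l -> exists b : stage n A N', c = emb b.
Proof.
  induction l as [|c l [N IH]].
  - exists 0. intros N' _ c [].
  - destruct (emb_at c) as [i Hi]. exists (Nat.max i N). intros N' HN c' [<-|Hc'].
    + apply Hi. lia.
    + apply IH; auto. lia.
Qed.

Lemma gen_act N (g : Gen n (stage n A N)) s :
  aact (Aclos n A) (emb (j := S N) (ginr g (mone M))) s = emb (j := S N) (ginr g s).
Proof.
  rewrite <- emb_morph by auto. f_equal. simpl stage.
  rewrite ginr_act by (apply stage_act; auto). rewrite mone_l. reflexivity.
Qed.

Lemma Aclos_solve (M0 : nat) (Sg : system M nat (Aclos n A)) :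
  (match n with None => True | Some k => M0 <= k end) -> 0 < M0 ->
  (forall x, occurs_in x Sg -> x < M0) -> finite_sys Sg -> consistent Sg ->
  exists f : nat -> Aclos n A, solves (fun c => c) f Sg.
Proof.
  intros Hbd H0 Hocc [l Hl] Hcons.
  set (consts := flat_map (fun q : eqn M nat (Aclos n A) =>
                   match q with EqVC _ _ c => c :: nil | _ => nil end) l).
  destruct (common_stage consts) as [N HN].
  assert (Hrep : forall q, Sg q -> forall x s c, q = EqVC x s c -> exists b : stage n A N, c = emb b).
  { intros q Hq x s c ->. apply HN; auto. apply in_flat_map. exists (EqVC x s c). split.
    apply Hl; auto. simpl; auto. }
  set (R := fun (c : Aclos n A) (b : stage n A N) => c = emb b).
  set (SgN := fun q : eqn M nat (stage n A N) =>
          (exists q0, Sg q0 /\ eqn_rel R q0 q) \/ (exists x, x < M0 /\ q = EqVV x (mone M) x (mone M))).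
  assert (HfinN : finite_sys SgN).
  { destruct (@image_list _ _ (eqn_rel R) l) as [l' Hl'].
    { intros q Hq. apply Hl in Hq. destruct q as [x s y t|x s c].
      - exists (EqVV x s y t). split. simpl; auto.
        intros [x' s' y' t'|]; simpl; try tauto. intros [-> [-> [-> ->]]]; auto.
      - destruct (Hrep _ Hq x s c eq_refl) as [b Hb]. exists (EqVC x s b). split. simpl; auto.
        intros [|x' s' b']; simpl; try tauto. intros [-> [-> Hb']].
        unfold R in Hb'. rewrite Hb in Hb'. apply emb_inj in Hb'; auto. subst; auto. }
    exists (l' ++ map (fun x => EqVV x (mone M) x (mone M)) (seq 0 M0)). intro q.
    rewrite in_app_iff, in_map_iff. unfold SgN. split.
    - intros [[q0 [Hq0 Hr]]|[x [Hx ->]]].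
      + left. apply Hl'. exists q0. split; auto. apply Hl; auto.
      + right. exists x. split; auto. apply in_seq. lia.
    - intros [Hq|[x [<- Hx]]].
      + left. apply Hl' in Hq. destruct Hq as [q0 [Hq0 Hr]]. exists q0. split; auto. apply Hl; auto.
      + right. exists x. split; auto. apply in_seq in Hx. lia. }
  assert (HconsN : consistent SgN).
  { destruct Hcons as [D [HD [e [He [Hem [f Hf]]]]]].
    exists D. split; auto. exists (fun b => e (emb b)). split.
    { intros a b H. apply He in H. apply emb_inj in H; auto. }
    split. { intros a s. rewrite emb_morph, Hem; auto. }
    exists f. intros q [[q0 [Hq0 Hr]]|[x [_ ->]]].
    - specialize (Hf q0 Hq0). destruct q0, q; simpl in Hr; try tauto; simpl in *.
      + destruct Hr as [-> [-> [-> ->]]]; auto.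
      + destruct Hr as [-> [-> Hr]]. unfold R in Hr. rewrite <- Hr; auto.
    - simpl. reflexivity. }
  assert (HoccN : forall x, occurs_in x SgN <-> x < M0).
  { intro x. split.
    - intros [q [[[q0 [Hq0 Hr]]|[y [Hy ->]]] Ho]].
      + apply Hocc. exists q0. split; auto. eapply occurs_eqn_rel; eauto.
      + simpl in Ho. lia.
    - intro Hx. exists (EqVV x (mone M) x (mone M)). split. right; eauto. simpl; auto. }
  assert (HadmN : admissible n SgN).
  { exists M0. split. destruct n; auto. exact HoccN. }
  set (mkgen := fun x (H : x < M0) => exist (fun p : system M nat (stage n A N) * nat =>
          finite_sys (fst p) /\ consistent (fst p) /\ admissible n (fst p) /\ occurs_in (snd p) (fst p))
          (SgN, x) (conj HfinN (conj HconsN (conj HadmN (proj2 (HoccN x) H))))).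
  set (f := fun x => match Compare_dec.lt_dec x M0 with
                     | left H => emb (j := S N) (ginr (mkgen x H) (mone M))
                     | right _ => emb (j := S N) (ginr (mkgen 0 H0) (mone M))
                     end).
  exists f. intros q Hq.
  assert (Hx : forall x, occurs x q -> exists H, f x = emb (j := S N) (ginr (mkgen x H) (mone M))).
  { intros x Hox. unfold f. destruct (Compare_dec.lt_dec x M0) as [H|H]. eauto.
    exfalso. apply H, Hocc. exists q; auto. }
  destruct q as [x s y t|x s c]; cbv beta iota delta [sat_eqn].
  - destruct (Hx x (or_introl eq_refl)) as [Hx1 ->]. destruct (Hx y (or_intror eq_refl)) as [Hy1 ->].
    rewrite !gen_act. f_equal. apply kb_eq. apply stage_act; auto.
    apply kb_VV. reflexivity. simpl. left. exists (EqVV x s y t). split; auto. simpl; auto.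
  - destruct (Hx x eq_refl) as [Hx1 ->]. rewrite gen_act.
    destruct (Hrep _ Hq x s c eq_refl) as [b ->].
    rewrite <- (emb_S b). f_equal. apply kb_eq. apply stage_act; auto.
    apply kb_VC. simpl. left. exists (EqVC x s (emb b)). split; auto. simpl. unfold R; auto.
Qed.

End Solve.

Section Ext.
Variable M : monoid.

Lemma theta_resp (n : option nat) (B C : preact M) (phi : B -> C) (V : system M nat B -> nat -> C) :
  is_act C -> is_morph phi ->
  (forall g : Gen n B, solves phi (V (fst (proj1_sig g))) (fst (proj1_sig g))) ->
  forall u v, cg (@kbase M n B) u v -> theta phi V u = theta phi V v.
Proof.
  intros HC Hphi HV. apply cg_resp. apply theta_morph; auto.
  intros u v H. destruct H as [g1 g2 s t Heq Hin|g s c Hin]; simpl.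
  - specialize (HV g1 _ Hin). simpl in HV. rewrite <- Heq. exact HV.
  - specialize (HV g _ Hin). exact HV.
Qed.

Lemma ext_facts (n : option nat) (B C : preact M) (phi : B -> C) (V : system M nat B -> nat -> C) :
  is_act B -> is_act C -> is_morph phi ->
  (forall g : Gen n B, solves phi (V (fst (proj1_sig g))) (fst (proj1_sig g))) ->
  is_morph (A := step n B) (fun P => theta phi V (qrep P)) /\
  (forall u, theta phi V (qrep (qcls (cg (@kbase M n B)) u)) = theta phi V u) /\
  (forall b, theta phi V (qrep (step_emb n b)) = phi b).
Proof.
  intros HB HC Hphi HV.
  assert (Hr : forall u, theta phi V (qrep (qcls (cg (@kbase M n B)) u)) = theta phi V u).
  { intro u. apply (qlift_qcls (f := theta phi V)). apply kequiv. apply theta_resp; auto. }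
  split; [|split; auto].
  - apply (qlift_morph (E := cg (@kbase M n B)) (f := theta phi V)); auto using kequiv, kcongr.
    apply theta_resp; auto. apply theta_morph; auto.
  - intro b. unfold step_emb. rewrite Hr. reflexivity.
Qed.

Section Lift.
Variables (n : option nat) (A C : preact M) (F : forall j, stage n A j -> C).
Hypothesis HF : forall j (b : stage n A j), @F (S j) (step_emb n b) = F b.
Hypothesis HFm : forall j, is_morph (@F j).

Definition Ftot (x : tot n A) : C := F (projT2 x).

Lemma Ftot_shift d x : Ftot (shift d x) = Ftot x.
Proof.
  destruct x as [i a]. unfold Ftot, shift; simpl. induction d; simpl; auto. rewrite HF; auto.
Qed.

Lemma Ftot_resp x y : Eunion x y -> Ftot x = Ftot y.
Proof. intros [d1 [d2 H]]. rewrite <- (Ftot_shift d1 x), H. apply Ftot_shift. Qed.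

Definition FA (P : Aclos n A) : C := qlift Ftot P.

Lemma FA_emb j (a : stage n A j) : FA (emb a) = F a.
Proof. unfold FA, emb. rewrite qlift_qcls. reflexivity. apply Eequiv. apply Ftot_resp. Qed.

Lemma FA_morph : is_act A -> is_morph FA.
Proof.
  intro HA. apply qlift_morph; auto using Eequiv, Econgr. apply Ftot_resp.
  intros [i a] s. unfold Ftot; simpl. apply HFm.
Qed.
End Lift.

Lemma ap_inh (C : preact M) : is_act C -> almost_pure C -> exists c : C, True.
Proof.
  intros HC Hap.
  destruct (Hap (fun q => q = EqVV tt (mone M) tt (mone M))) as [f _].
  - exists (EqVV tt (mone M) tt (mone M) :: nil). intro q; simpl; split; intuition.
  - exists (optact C). split. apply optact_act; auto. exists (fun c => Some c).
    split. intros a b H; injection H; auto. split. intros a s; reflexivity.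
    exists (fun _ => None). intros q ->. reflexivity.
  - exists (f tt); auto.
Qed.

Lemma abs_inh (C : preact M) : is_act C -> abs_pure C -> exists c : C, True.
Proof.
  intros HC Hap.
  destruct (Hap (fun q => q = EqVV 0 (mone M) 0 (mone M))) as [f _].
  - exists (EqVV 0 (mone M) 0 (mone M) :: nil). intro q; simpl; split; intuition.
  - exists (optact C). split. apply optact_act; auto. exists (fun c => Some c).
    split. intros a b H; injection H; auto. split. intros a s; reflexivity.
    exists (fun _ => None). intros q ->. reflexivity.
  - exists (f 0); auto.
Qed.

Lemma retract_abs (C C' : preact M) (i : C -> C') (r : C' -> C) :
  is_act C' -> abs_pure C' -> is_morph i -> is_morph r -> (forall c, r (i c) = c) -> abs_pure C.
Proof.
  intros HC' Hap Hi Hr Hri Sg Hfin Hcons.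
  destruct (Hap _ (finite_sysmap (fun x => x) i Hfin) (T1 HC' Hi Hcons)) as [f Hf].
  exists (fun x => r (f x)). apply sm1 in Hf.
  intros q Hq. specialize (Hf q Hq). destruct q; simpl in *; rewrite <- ?Hr; rewrite Hf; auto.
Qed.

Lemma adm1_var0 (C : Type) (Sg : system M nat C) : admissible (Some 1) Sg -> forall x, occurs_in x Sg -> x = 0.
Proof. intros [m [Hm Ho]] x Hx. apply Ho in Hx. lia. Qed.

Lemma ap_solves1 (B C : preact M) (phi : B -> C) (Sg : system M nat B) :
  is_act C -> almost_pure C -> is_morph phi -> finite_sys Sg -> consistent Sg ->
  admissible (Some 1) Sg -> exists u : C, solves phi (fun _ => u) Sg.
Proof.
  intros HC Hap Hphi Hfin Hcons Hadm.
  destruct (Hap (sysmap (fun _ => tt) phi Sg)) as [fu Hfu].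
  - apply finite_sysmap; auto.
  - destruct (T1 HC Hphi Hcons) as [D [HD [e [He [Hem [f Hf]]]]]].
    exists D. split; auto. exists e. split; auto. split; auto. exists (fun _ => f 0).
    apply sm2. apply sm1 in Hf. intros q Hq. specialize (Hf q Hq).
    eapply sat_ext; [|exact Hf]. intros x Hx. simpl.
    rewrite (adm1_var0 Hadm (x := x)); auto. exists q; auto.
  - exists (fu tt). apply sm1 in Hfu. exact Hfu.
Qed.

Section ExtA1.
Variables (A C : preact M) (phi0 : A -> C) (c0 : C).
Hypotheses (HA : is_act A) (HC : is_act C) (Hap : almost_pure C) (Hphi0 : is_morph phi0).

Definition Vap (B : preact M) (phi : B -> C) (Sg : system M nat B) : nat -> C :=
  fun _ => match excluded_middle_informative (exists u, solves phi (fun _ => u) Sg) with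
           | left H => proj1_sig (constructive_indefinite_description _ H)
           | right _ => c0
           end.

Fixpoint Fap (j : nat) : stage (Some 1) A j -> C :=
  match j as j return stage (Some 1) A j -> C with
  | 0 => phi0
  | S j => fun P => theta (@Fap j) (Vap (@Fap j)) (qrep P)
  end.

Lemma Fap_HV j : is_morph (@Fap j) -> forall g : Gen (Some 1) (stage (Some 1) A j),
  solves (@Fap j) (Vap (@Fap j) (fst (proj1_sig g))) (fst (proj1_sig g)).
Proof.
  intros Hm g. unfold Vap. destruct (excluded_middle_informative _) as [H|H].
  - exact (proj2_sig (constructive_indefinite_description _ H)).
  - exfalso. apply H. destruct (proj2_sig g) as [Hf [Hc [Had _]]]. apply ap_solves1; auto.
Qed.

Lemma Fap_morph j : is_morph (@Fap j).
Proof.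
  induction j as [|j IH]. exact Hphi0.
  exact (proj1 (ext_facts (stage_act _ HA j) HC IH (@Fap_HV j IH))).
Qed.

Lemma Fap_S j (b : stage (Some 1) A j) : @Fap (S j) (step_emb _ b) = Fap b.
Proof. exact (proj2 (proj2 (ext_facts (stage_act _ HA j) HC (@Fap_morph j) (@Fap_HV j (@Fap_morph j)))) b). Qed.

Lemma ext_A1 : exists psi : A1 A -> C, is_morph psi /\ forall a : A, psi (emb (n := Some 1) (j := 0) a) = phi0 a.
Proof.
  exists (FA Fap). split. apply FA_morph; auto. apply Fap_S. apply Fap_morph.
  intro a. rewrite FA_emb. reflexivity. apply Fap_S.
Qed.

End ExtA1.
End Ext.

Section Pure.
Variable M : monoid.

Lemma A1_ap (A : preact M) : is_act A -> almost_pure (A1 A).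
Proof.
  intros HA Sg Hfin Hcons. unfold A1 in *.
  destruct (@Aclos_solve M (Some 1) A HA 1 (sysmap (fun _ => 0) (fun c => c) Sg)) as [f Hf].
  - lia.
  - lia.
  - intros x [q' [[q [_ ->]] Ho]]. destruct q; simpl in Ho; lia.
  - apply finite_sysmap; auto.
  - destruct Hcons as [D [HD [e [He [Hem [f Hf]]]]]]. exists D. split; auto. exists e.
    split; auto. split; auto. exists (fun _ => f tt). apply sm2. intros q Hq.
    specialize (Hf q Hq). destruct q as [[] s [] t|[] s c]; exact Hf.
  - exists (fun _ => f 0). apply sm1 in Hf. exact Hf.
Qed.

Fixpoint maxvar (C : Type) (l : list (eqn M nat C)) : nat :=
  match l with
  | nil => 0
  | EqVV x _ y _ :: l => Nat.max x (Nat.max y (maxvar l))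
  | EqVC x _ _ :: l => Nat.max x (maxvar l)
  end.

Lemma maxvar_spec (C : Type) (l : list (eqn M nat C)) q x : In q l -> occurs x q -> x <= maxvar l.
Proof.
  induction l as [|q' l IH]; simpl. tauto.
  intros [->|Hq] Ho.
  - destruct q; simpl in *; lia.
  - specialize (IH Hq Ho). destruct q'; lia.
Qed.

Lemma Aal_abs (A : preact M) : is_act A -> abs_pure (Aaleph0 A).
Proof.
  intros HA Sg [l Hl] Hcons. unfold Aaleph0 in *.
  apply (@Aclos_solve M None A HA (S (maxvar l))); auto.
  - lia.
  - intros x [q [Hq Ho]]. apply Hl in Hq. pose proof (maxvar_spec Hq Ho). lia.
  - exists l; auto.
Qed.

Lemma c2_to_c1 (A : preact M) : is_act A -> almost_pure A -> abs_pure (A1 A) -> abs_pure A.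
Proof.
  intros HA Hap Habs. destruct (ap_inh HA Hap) as [c0 _].
  destruct (@ext_A1 M A A (fun a => a) c0 HA HA Hap (fun a s => eq_refl)) as [psi [Hpsi Hpe]].
  apply (@retract_abs M A (A1 A) (fun a => emb (n := Some 1) (j := 0) a) psi); auto.
  apply Aclos_act; auto. intros a s. apply emb_morph; auto.
Qed.

End Pure.

Section Jsec.
Variable M : monoid.

Lemma eqn_rel_iff (C1 C2 : Type) (R : C1 -> C2 -> Prop) (h : C1 -> C2) (q : eqn M nat C1) q' :
  (forall a b, R a b <-> b = h a) -> (eqn_rel R q q' <-> q' = emap (fun x => x) h q).
Proof.
  intro HR. destruct q as [x s y t|x s c], q' as [x' s' y' t'|x' s' c']; simpl; split;
    try tauto; try discriminate.
  - intros [-> [-> [-> ->]]]; auto.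
  - intro H; injection H; intros; subst; auto.
  - intros [-> [-> H]]. apply HR in H. subst; auto.
  - intro H; injection H; intros; subst. split; auto. split; auto. apply HR; auto.
Qed.

Lemma emap_inj (C1 C2 : Type) (h : C1 -> C2) : injective h -> injective (emap (M := M) (fun x : nat => x) h).
Proof.
  intros Hh [x s y t|x s c] [x' s' y' t'|x' s' c']; simpl; intro H; try discriminate;
    injection H; intros; subst; auto. apply Hh in H0. subst; auto.
Qed.

Lemma sysmap_inj (C1 C2 : Type) (h : C1 -> C2) (S1 S2 : system M nat C1) :
  injective h -> sysmap (fun x => x) h S1 = sysmap (fun x => x) h S2 -> S1 = S2.
Proof.
  intros Hh H. apply functional_extensionality; intro q; apply propositional_extensionality.
  split; intro Hq.
  - assert (sysmap (fun x => x) h S2 (emap (fun x => x) h q)) as [q2 [Hq2 He]].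
    { rewrite <- H. exists q; auto. }
    apply emap_inj in He; auto. subst; auto.
  - assert (sysmap (fun x => x) h S1 (emap (fun x => x) h q)) as [q2 [Hq2 He]].
    { rewrite H. exists q; auto. }
    apply emap_inj in He; auto. subst; auto.
Qed.

Lemma gen_eq (n : option nat) (C : preact M) (g g' : Gen n C) : proj1_sig g = proj1_sig g' -> g = g'.
Proof. intro H. apply eq_sig_hprop; auto. intros; apply proof_irrelevance. Qed.

Variable A : preact M.
Hypothesis HA : is_act A.

Definition trivS (C : Type) : system M nat C := fun q => q = EqVV 0 (mone M) 0 (mone M).
Arguments trivS : clear implicits.

Lemma triv_ok (C : preact M) : is_act C ->
  finite_sys (trivS C) /\ consistent (trivS C) /\ admissible None (trivS C) /\ occurs_in 0 (trivS C).
Proof.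
  intro HC. split; [|split; [|split]].
  - exists (EqVV 0 (mone M) 0 (mone M) :: nil). intro q; unfold trivS; simpl; intuition.
  - exists (optact C). split. apply optact_act; auto. exists (fun c => Some c).
    split. intros a b H; injection H; auto. split. intros a s; reflexivity.
    exists (fun _ => None). intros q ->. reflexivity.
  - exists 1. split; auto. intro x. split.
    + intros [q [-> Ho]]. simpl in Ho. lia.
    + intro Hx. exists (EqVV 0 (mone M) 0 (mone M)). split. reflexivity. simpl. lia.
  - exists (EqVV 0 (mone M) 0 (mone M)). split. reflexivity. simpl; auto.
Qed.

Definition dflt j : Gen None (stage None A j) :=
  exist _ (trivS _, 0) (triv_ok (stage_act None HA j)).

Definition Hg j (phi : stage (Some 1) A j -> stage None A j) (g : Gen (Some 1) (stage (Some 1) A j))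
  : Gen None (stage None A j) :=
  match excluded_middle_informative
    (finite_sys (sysmap (fun x => x) phi (fst (proj1_sig g))) /\
     consistent (sysmap (fun x => x) phi (fst (proj1_sig g))) /\
     admissible None (sysmap (fun x => x) phi (fst (proj1_sig g))) /\
     occurs_in (snd (proj1_sig g)) (sysmap (fun x => x) phi (fst (proj1_sig g)))) with
  | left H => exist (fun p : system M nat (stage None A j) * nat =>
                finite_sys (fst p) /\ consistent (fst p) /\ admissible None (fst p) /\ occurs_in (snd p) (fst p))
                (sysmap (fun x => x) phi (fst (proj1_sig g)), snd (proj1_sig g)) H
  | right _ => dflt j
  end.

Arguments Hg : clear implicits.

Lemma Hg_val j phi g : is_morph phi ->
  proj1_sig (Hg j phi g) = (sysmap (fun x => x) phi (fst (proj1_sig g)), snd (proj1_sig g)).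
Proof.
  intro Hphi. unfold Hg. destruct (excluded_middle_informative _) as [H|H]. reflexivity.
  exfalso. apply H. destruct (proj2_sig g) as [Hf [Hc [[m [_ Hm]] Ho]]].
  split; [|split; [|split]].
  - apply finite_sysmap; auto.
  - apply T1; auto. apply stage_act; auto.
  - exists m. split; auto. intro x. rewrite occurs_in_sysmap. apply Hm.
  - apply occurs_in_sysmap. auto.
Qed.

Definition htil j (phi : stage (Some 1) A j -> stage None A j) (u : pre (Some 1) (stage (Some 1) A j))
  : pre None (stage None A j) :=
  match u with
  | inl a => inl (phi a)
  | inr (g, s) => inr (Hg j phi g, s)
  end.

Arguments htil : clear implicits.

Lemma htil_morph j phi : is_morph phi -> is_morph (htil j phi).
Proof. intros Hphi [a|[g s]] t; simpl; auto. rewrite Hphi; auto. Qed.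

Lemma htil_cg j phi : is_morph phi -> forall u v,
  cg (@kbase M (Some 1) (stage (Some 1) A j)) u v ->
  cg (@kbase M None (stage None A j)) (htil j phi u) (htil j phi v).
Proof.
  intros Hphi. apply cg_map. apply pre_act, stage_act; auto. apply htil_morph; auto.
  intros u v H. apply cg_of. apply pre_act, stage_act; auto.
  destruct H as [g1 g2 s t Heq Hin|g s c Hin]; simpl.
  - apply kb_VV. rewrite !Hg_val; auto. simpl. rewrite Heq; auto.
    rewrite !Hg_val; auto. simpl. exists (EqVV (snd (proj1_sig g1)) s (snd (proj1_sig g2)) t). split; auto.
  - apply kb_VC. rewrite !Hg_val; auto. simpl. exists (EqVC (snd (proj1_sig g)) s c). split; auto.
Qed.

Fixpoint hst (j : nat) : stage (Some 1) A j -> stage None A j :=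
  match j as j return stage (Some 1) A j -> stage None A j with
  | 0 => fun a => a
  | S j => fun P => qcls _ (htil j (@hst j) (qrep P))
  end.

Lemma hst_morph j : is_morph (@hst j).
Proof.
  induction j as [|j IH]. intros a s; reflexivity.
  apply (qlift_morph (E := cg (@kbase M (Some 1) (stage (Some 1) A j)))
           (Y := step None (stage None A j)) (f := fun u => qcls _ (htil j (@hst j) u))).
  apply kequiv. apply kcongr, stage_act; auto.
  intros u v H. apply qcls_eq. apply kequiv. apply htil_cg; auto.
  intros u s. rewrite step_qact. rewrite htil_morph; auto. apply stage_act; auto.
Qed.

Lemma hst_qcls j u : @hst (S j) (qcls _ u) = qcls _ (htil j (@hst j) u).
Proof.
  apply (qlift_qcls (E := cg (@kbase M (Some 1) (stage (Some 1) A j)))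
           (f := fun u => qcls (cg (@kbase M None (stage None A j))) (htil j (@hst j) u))).
  apply kequiv. intros x y H. apply qcls_eq. apply kequiv. apply htil_cg; auto. apply hst_morph.
Qed.

Lemma hst_S j (b : stage (Some 1) A j) : @hst (S j) (step_emb _ b) = step_emb _ (hst b).
Proof. unfold step_emb. rewrite hst_qcls. reflexivity. Qed.

Lemma Jpre_iff j (x : pre (Some 1) (stage (Some 1) A j)) y :
  (forall a b, @Jst M A j a b <-> b = hst a) ->
  (Jpre (@Jst M A j) x y <-> y = htil j (@hst j) x).
Proof.
  intro IH. destruct x as [a|[g s]], y as [b|[g' s']]; simpl; split; try tauto; try discriminate.
  - intro H. apply IH in H. subst; auto.
  - intro H. injection H; intro; subst. apply IH; auto.
  - intros [-> [Hsnd Hsys]]. f_equal. f_equal. apply gen_eq. rewrite Hg_val by apply hst_morph.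
    destruct (proj1_sig g') as [S' x'] eqn:E'. simpl in *. f_equal; auto.
    apply functional_extensionality; intro q'; apply propositional_extensionality.
    rewrite Hsys. split.
    + intros [q [Hq Hr]]. exists q. split; auto. apply (eqn_rel_iff _ _ IH) in Hr; auto.
    + intros [q [Hq Hr]]. exists q. split; auto. apply (eqn_rel_iff _ _ IH); auto.
  - intro H. injection H; intros; subst. rewrite Hg_val by apply hst_morph. simpl.
    split; auto. split; auto. intro q'. split.
    + intros [q [Hq Hr]]. exists q. split; auto. apply (eqn_rel_iff _ _ IH); auto.
    + intros [q [Hq Hr]]. exists q. split; auto. apply (eqn_rel_iff _ _ IH) in Hr; auto.
Qed.

Lemma Jst_iff j : forall a b, @Jst M A j a b <-> b = hst a.
Proof.
  induction j as [|j IH]; intros a b.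
  - simpl. split; auto.
  - cbn [Jst]. split.
    + intros [x [y [-> [-> Hj]]]]. rewrite hst_qcls. f_equal. apply Jpre_iff; auto.
    + intros ->. exists (qrep a), (htil j (@hst j) (qrep a)). split. symmetry; apply qcls_qrep.
      split. reflexivity. apply Jpre_iff; auto.
Qed.

End Jsec.

Section Retr.
Variable M : monoid.
Variable A : preact M.
Hypothesis HA : is_act A.

Definition hA : A1 A -> Aaleph0 A :=
  FA (n := Some 1) (A := A) (C := Aaleph0 A) (fun j a => emb (n := None) (j := j) (hst HA a)).

Lemma hA_ok : is_morph hA /\ forall x, Jincl x (hA x).
Proof.
  assert (HF : forall j (b : stage (Some 1) A j),
    emb (n := None) (j := S j) (@hst M A HA (S j) (step_emb _ b)) = emb (hst HA b)).
  { intros j b. rewrite hst_S. apply emb_S. }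
  assert (HFm : forall j, is_morph (fun a : stage (Some 1) A j => emb (n := None) (j := j) (hst HA a))).
  { intros j a s. rewrite hst_morph. apply emb_morph; auto. }
  split.
  - apply FA_morph; auto.
  - intro x. destruct (Aclos_surj x) as [i [a ->]]. exists i, a, (hst HA a).
    split. exact (proj2 (@Jst_iff M A HA i a (hst HA a)) eq_refl). split. reflexivity.
    unfold hA. rewrite FA_emb; auto.
Qed.

Lemma retract_to_abs : A1_retract A -> abs_pure (A1 A).
Proof.
  intros [r [Hr Hri]]. destruct hA_ok as [Hm HJ].
  apply (@retract_abs M (A1 A) (Aaleph0 A) hA r); auto.
  apply Aclos_act; auto. apply Aal_abs; auto.
Qed.

Section Rst.
Variable d0 : A1 A.
Hypothesis Habs : abs_pure (A1 A).

Definition Vr j (phi : stage None A j -> A1 A) (Sg' : system M nat (stage None A j)) : nat -> A1 A :=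
  match excluded_middle_informative
     (exists g : Gen (Some 1) (stage (Some 1) A j), sysmap (fun x => x) (@hst M A HA j) (fst (proj1_sig g)) = Sg') with
  | left H => fun _ => emb (n := Some 1) (j := S j) (ginr (proj1_sig (constructive_indefinite_description _ H)) (mone M))
  | right _ => match excluded_middle_informative (exists f, solves phi f Sg') with
               | left H => proj1_sig (constructive_indefinite_description _ H)
               | right _ => fun _ => d0
               end
  end.

Arguments Vr : clear implicits.

Fixpoint rst (j : nat) : stage None A j -> A1 A :=
  match j as j return stage None A j -> A1 A with
  | 0 => fun b => emb (n := Some 1) (j := 0) b
  | S j => fun Q => theta (@rst j) (Vr j (@rst j)) (qrep Q)
  end.

Lemma Vr_HV j : is_morph (@rst j) -> (forall a, rst (hst HA a) = emb (n := Some 1) (j := j) a) ->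
  forall g' : Gen None (stage None A j), solves (@rst j) (Vr j (@rst j) (fst (proj1_sig g'))) (fst (proj1_sig g')).
Proof.
  intros Hm Hv g'. unfold Vr. destruct (excluded_middle_informative _) as [H|H].
  - destruct (constructive_indefinite_description _ H) as [g Hg]. simpl.
    rewrite <- Hg. apply sm2. intros q Hq.
    destruct (proj2_sig g) as [_ [_ [Had Hocc]]].
    assert (Hs0 : snd (proj1_sig g) = 0) by (eapply adm1_var0; eauto).
    destruct q as [x s y t|x s c]; cbv beta iota delta [sat_eqn].
    + assert (x = 0) by (eapply adm1_var0; eauto; exists (EqVV x s y t); simpl; auto).
      assert (y = 0) by (eapply adm1_var0; eauto; exists (EqVV x s y t); simpl; auto). subst.
      unfold A1. rewrite !gen_act; auto. f_equal. apply kb_eq. apply stage_act; auto.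
      apply kb_VV; auto. rewrite Hs0. auto.
    + assert (x = 0) by (eapply adm1_var0; eauto; exists (EqVC x s c); simpl; auto). subst.
      unfold A1. rewrite gen_act; auto. rewrite Hv, <- (emb_S c). f_equal. apply kb_eq. apply stage_act; auto.
      apply kb_VC; auto. rewrite Hs0. auto.
  - destruct (excluded_middle_informative _) as [H'|H'].
    + exact (proj2_sig (constructive_indefinite_description _ H')).
    + exfalso. apply H'. destruct (proj2_sig g') as [Hf [Hc _]].
      destruct (Habs (finite_sysmap (fun x => x) (@rst j) Hf) (T1 (Aclos_act _ HA) Hm Hc)) as [f Hf'].
      exists f. apply sm1 in Hf'. exact Hf'.
Qed.

Lemma rst_ok j : is_morph (@rst j) /\ (forall a, rst (hst HA a) = emb (n := Some 1) (j := j) a).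
Proof.
  induction j as [|j [Hm Hv]].
  - split. intros a s. apply (@emb_morph M (Some 1) A HA 0). intro a. reflexivity.
  - destruct (ext_facts (stage_act _ HA j) (Aclos_act _ HA) Hm (Vr_HV Hm Hv)) as [H1 [H2 H3]].
    split. exact H1.
    assert (Hinj : injective (@hst M A HA j)).
    { intros a b H. apply (f_equal (@rst j)) in H. rewrite !Hv in H. apply emb_inj in H; auto. }
    intro P. pattern P. apply quot_ind. intro x.
    change (@rst (S j) (@hst M A HA (S j) (qcls _ x)) = emb (n := Some 1) (j := S j) (qcls _ x : step (Some 1) (stage (Some 1) A j))).
    rewrite hst_qcls. simpl rst. rewrite H2.
    destruct x as [a|[g s]].
    + simpl. rewrite Hv. rewrite <- emb_S. reflexivity.
    + unfold theta, htil; cbv beta iota. rewrite Hg_val by apply hst_morph. cbn [fst snd]. unfold Vr.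
      destruct (excluded_middle_informative _) as [H|H].
      * destruct (constructive_indefinite_description _ H) as [g' Hg']. cbn [proj1_sig].
        apply sysmap_inj in Hg'; auto.
        assert (g' = g).
        { apply gen_eq. destruct (proj2_sig g) as [_ [_ [Had Hocc]]].
          destruct (proj2_sig g') as [_ [_ [Had' Hocc']]].
          pose proof (adm1_var0 Had Hocc). pose proof (adm1_var0 Had' Hocc').
          apply injective_projections. exact Hg'. etransitivity; [exact H4|symmetry; exact H0]. }
        subst g'. unfold A1. rewrite gen_act; auto.
      * exfalso. apply H. exists g; auto.
Qed.

Lemma rst_S j (b : stage None A j) : @rst (S j) (step_emb _ b) = rst b.
Proof.
  destruct (rst_ok j) as [Hm Hv].
  exact (proj2 (proj2 (ext_facts (stage_act _ HA j) (Aclos_act _ HA) Hm (Vr_HV Hm Hv))) b).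
Qed.

Lemma c4_of : A1_retract A.
Proof.
  exists (FA (n := None) (A := A) (C := A1 A) rst). split.
  - apply FA_morph; auto. apply rst_S. intro j; apply rst_ok.
  - intros x y [i [a [b [Hj [-> ->]]]]]. apply (proj1 (@Jst_iff M A HA i a b)) in Hj. subst b.
    change (FA (n := None) (A := A) (C := A1 A) rst (emb (hst HA a)) = emb (n := Some 1) a).
    rewrite FA_emb. apply rst_ok. apply rst_S.
Qed.
End Rst.

Lemma abs_to_retract : abs_pure (A1 A) -> A1_retract A.
Proof.
  intro Habs. destruct (abs_inh (Aclos_act _ HA) Habs) as [d0 _]. exact (c4_of d0 Habs).
Qed.

End Retr.

Section Pres.
Variable M : monoid.
Variables (C D : preact M) (l : list (eqn M nat C)) (e : C -> D) (f0 : nat -> D).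
Hypotheses (HC : is_act C) (HD : is_act D) (He : injective e) (Hem : is_morph e)
  (Hf0 : forall q, In q l -> sat_eqn e f0 q).

Definition kk := length l.
Definition M0 := S (maxvar l).
Definition nn := kk + M0.
Lemma H0n : 0 < nn. Proof. unfold nn, M0. lia. Qed.

Definition fidx (i : nat) : {i : nat | i < nn} :=
  match Compare_dec.lt_dec i nn with
  | left H => exist _ i H
  | right _ => exist _ 0 H0n
  end.

Lemma fidx_val i : i < nn -> proj1_sig (fidx i) = i.
Proof. intro H. unfold fidx. destruct (Compare_dec.lt_dec i nn); simpl; auto; lia. Qed.

Definition FF := free_fin M nn.

Definition relof (i : nat) (q : eqn M nat C) : FF * FF :=
  match q with
  | EqVV x s y t => ((fidx (kk + x), s), (fidx (kk + y), t))
  | EqVC x s c => ((fidx (kk + x), s), (fidx i, mone M))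
  end.

Definition RR : list (FF * FF) :=
  flat_map (fun i => match nth_error l i with Some q => relof i q :: nil | None => nil end) (seq 0 kk).

Definition Rel (a b : FF) : Prop := In (a, b) RR.

Lemma in_RR a b : In (a, b) RR -> exists i q, nth_error l i = Some q /\ (a, b) = relof i q.
Proof.
  unfold RR. rewrite in_flat_map. intros [i [_ Hi]].
  destruct (nth_error l i) as [q|] eqn:E; simpl in Hi; [|tauto].
  destruct Hi as [Hi|[]]. eauto.
Qed.

Lemma relof_RR i q : nth_error l i = Some q -> In (relof i q) RR.
Proof.
  intro H. unfold RR. rewrite in_flat_map. exists i. split.
  apply in_seq. split. lia. simpl. apply nth_error_Some. unfold kk in *. congruence.
  rewrite H. simpl; auto.
Qed.

Lemma free_act : is_act FF.
Proof.
  split.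
  - intros [i u]. simpl. rewrite mone_r. reflexivity.
  - intros [i u] s t. simpl. rewrite massoc. reflexivity.
Qed.

Definition PP : preact M := quot_preact (cg Rel).

Lemma PP_act : is_act PP.
Proof. apply quot_is_act. apply cg_equiv. apply cg_congr, free_act. apply free_act. Qed.

Lemma PP_qact (z : FF) s : aact PP (qcls _ z) s = qcls _ (aact FF z s).
Proof. apply quot_act. apply cg_equiv. apply cg_congr, free_act. Qed.

Lemma PP_rel a b : Rel a b -> qcls (cg Rel) a = qcls _ b.
Proof. intro H. apply qcls_eq. apply cg_equiv. apply cg_of. apply free_act. exact H. Qed.

Lemma PP_pres : fin_pres PP.
Proof.
  exists nn, (fun i => qcls (cg Rel) ((i, mone M) : FF)), RR. cbv zeta.
  assert (Hpi : forall x : FF, aact PP (qcls (cg Rel) ((fst x, mone M) : FF)) (snd x) = qcls _ x).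
  { intros [i u]. rewrite PP_qact. simpl. rewrite mone_l. reflexivity. }
  split.
  - intro p. exists (qrep p). rewrite Hpi. symmetry; apply qcls_qrep.
  - intros x y. rewrite !Hpi. split.
    + intro H. apply qcls_inv in H. exact H. apply cg_equiv.
    + intro H. apply qcls_eq. apply cg_equiv. exact H.
Qed.

Definition slot i := exists x s c, nth_error l i = Some (EqVC x s c).

Definition Acar := {p : PP | exists i u, slot i /\ p = qcls (cg Rel) ((fidx i, u) : FF)}.

Lemma Aclosed (a : Acar) s : exists i u, slot i /\ aact PP (proj1_sig a) s = qcls (cg Rel) ((fidx i, u) : FF).
Proof.
  destruct a as [p [i [u [Hs ->]]]]. cbn [proj1_sig]. exists i, (mmul M u s). split; auto.
  rewrite PP_qact. reflexivity.
Qed.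

Definition AA : preact M := PreAct Acar (fun a s => exist _ (aact PP (proj1_sig a) s) (Aclosed a s)).

Lemma AA_act : is_act AA.
Proof.
  destruct PP_act as [H1 H2]. split.
  - intros [p Hp]. apply eq_sig_hprop. intros; apply proof_irrelevance. simpl. apply H1.
  - intros [p Hp] s t. apply eq_sig_hprop. intros; apply proof_irrelevance. simpl. apply H2.
Qed.

Definition mkgen i (H : slot i) : AA :=
  exist _ (qcls (cg Rel) ((fidx i, mone M) : FF)) (ex_intro _ i (ex_intro _ (mone M) (conj H eq_refl))).

Lemma slot_lt i : slot i -> i < kk.
Proof. intros [x [s [c H]]]. apply nth_error_Some. unfold kk in *. congruence. Qed.

Lemma AA_fg : fin_gen AA.
Proof.
  assert (Hg : forall m, exists L : list AA, forall i (H : slot i), i < m -> In (mkgen H) L).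
  { induction m as [|m [L HL]].
    - exists nil. intros; lia.
    - destruct (classic (slot m)) as [Hm|Hm].
      + exists (mkgen Hm :: L). intros i H Hi. destruct (Nat.eq_dec i m) as [->|Hne].
        * left. f_equal. apply proof_irrelevance.
        * right. apply HL. lia.
      + exists L. intros i H Hi. destruct (Nat.eq_dec i m) as [->|Hne]. contradiction. apply HL. lia. }
  destruct (Hg kk) as [L HL]. exists L. intros [p [i [u [Hs ->]]]].
  exists (mkgen Hs), u. split. apply HL. apply slot_lt; auto.
  apply eq_sig_hprop. intros; apply proof_irrelevance. cbn [aact AA proj1_sig mkgen].
  rewrite PP_qact. cbn [aact FF free_fin fst snd]. rewrite mone_l. reflexivity.
Qed.

Lemma AA_fgfp : fg_sub_fp AA.
Proof.
  split. apply AA_fg. exists PP. split. apply PP_act. split. apply PP_pres.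
  exists (fun a => proj1_sig a). split.
  - intros a b H. apply eq_sig_hprop; auto. intros; apply proof_irrelevance.
  - intros a s; reflexivity.
Qed.

Definition base (i : nat) : D :=
  match nth_error l i with
  | Some (EqVC _ _ c) => e c
  | _ => f0 (i - kk)
  end.

Definition chi (p : FF) : D := aact D (base (proj1_sig (fst p))) (snd p).

Lemma chi_morph : is_morph chi.
Proof. intros [i u] s. unfold chi; simpl. destruct HD as [_ H2]. apply H2. Qed.

Lemma var_lt q x : In q l -> occurs x q -> kk + x < nn.
Proof. intros Hq Ho. pose proof (maxvar_spec Hq Ho). unfold nn, M0. lia. Qed.

Lemma base_var x : kk + x < nn -> base (proj1_sig (fidx (kk + x))) = f0 x.
Proof.
  intro H. rewrite fidx_val; auto. unfold base.
  assert (nth_error l (kk + x) = None) as -> by (apply nth_error_None; unfold kk; lia).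
  f_equal. lia.
Qed.

Lemma chi_rel a b : Rel a b -> chi a = chi b.
Proof.
  intro H. destruct (in_RR H) as [i [q [Hi Hab]]].
  assert (Hq : In q l) by (eapply nth_error_In; eauto).
  pose proof (Hf0 Hq) as Hs.
  destruct q as [x s y t|x s c]; simpl in Hab; injection Hab; intros; subst; unfold chi; simpl.
  - rewrite !base_var; [exact Hs| |]; eapply var_lt; eauto; simpl; auto.
  - rewrite base_var by (eapply var_lt; eauto; simpl; auto).
    rewrite fidx_val. unfold base. rewrite Hi. destruct HD as [H1 _]. rewrite H1. exact Hs.
    assert (i < kk) by (apply nth_error_Some; unfold kk in *; congruence). unfold nn; lia.
Qed.

Definition chib (p : PP) : D := qlift chi p.

Lemma chib_qcls z : chib (qcls _ z) = chi z.
Proof. apply qlift_qcls. apply cg_equiv. apply cg_resp. apply chi_morph. apply chi_rel. Qed.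

Lemma chib_morph : is_morph chib.
Proof.
  apply qlift_morph. apply cg_equiv. apply cg_congr, free_act.
  apply cg_resp. apply chi_morph. apply chi_rel. apply chi_morph.
Qed.

Lemma Hex (a : AA) : exists c, e c = chib (proj1_sig a).
Proof.
  destruct a as [p [i [u [[x [s [c Hs]]] ->]]]]. simpl. rewrite chib_qcls. unfold chi; simpl.
  rewrite fidx_val. unfold base. rewrite Hs. exists (aact C c u). apply Hem.
  assert (i < kk) by (apply nth_error_Some; unfold kk in *; congruence). unfold nn; lia.
Qed.

Definition phiA (a : AA) : C := proj1_sig (constructive_indefinite_description _ (Hex a)).

Lemma phiA_spec a : e (phiA a) = chib (proj1_sig a).
Proof. unfold phiA. destruct (constructive_indefinite_description _ _); auto. Qed.

Lemma phiA_morph : is_morph phiA.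
Proof.
  intros a s. apply He. rewrite Hem, !phiA_spec. simpl. apply chib_morph.
Qed.

Definition relA (t : nat * eqn M nat C) (q : eqn M nat AA) : Prop :=
  match snd t with
  | EqVV x s y t' => q = EqVV x s y t'
  | EqVC x s c => exists a : AA, q = EqVC x s a /\ proj1_sig a = qcls (cg Rel) ((fidx (fst t), mone M) : FF)
  end.

Definition SgA (q : eqn M nat AA) : Prop := exists i q0, nth_error l i = Some q0 /\ relA (i, q0) q.

Lemma SgA_fin : finite_sys SgA.
Proof.
  set (LT := flat_map (fun i => match nth_error l i with Some q => (i, q) :: nil | None => nil end) (seq 0 kk)).
  assert (HLT : forall i q, In (i, q) LT <-> nth_error l i = Some q).
  { intros i q. unfold LT. rewrite in_flat_map. split.
    - intros [i' [_ H]]. destruct (nth_error l i') eqn:E; simpl in H; [|tauto].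
      destruct H as [H|[]]. injection H; intros; subst; auto.
    - intro H. exists i. split. apply in_seq. split. lia. simpl.
      apply nth_error_Some. unfold kk; congruence. rewrite H; simpl; auto. }
  destruct (@image_list _ _ relA LT) as [LA HLA].
  { intros [i q0] Hin. apply HLT in Hin. destruct q0 as [x s y t|x s c]; simpl.
    - exists (EqVV x s y t). unfold relA; simpl. split; auto.
    - assert (Hs : slot i) by (exists x, s, c; auto).
      exists (EqVC x s (mkgen Hs)). unfold relA; simpl. split. exists (mkgen Hs); auto.
      intros u' [a [-> Ha]]. f_equal. apply eq_sig_hprop. intros; apply proof_irrelevance. exact Ha. }
  exists LA. intro q. rewrite <- HLA. split.
  - intros [i [q0 [Hi Hr]]]. exists (i, q0). split; auto. apply HLT; auto.
  - intros [[i q0] [Hin Hr]]. apply HLT in Hin. exists i, q0. auto.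
Qed.

Lemma SgA_cons : consistent SgA.
Proof.
  exists PP. split. apply PP_act. exists (fun a : AA => proj1_sig a). split.
  { intros a b H. apply eq_sig_hprop; auto. intros; apply proof_irrelevance. }
  split. { intros a s; reflexivity. }
  exists (fun x => qcls (cg Rel) ((fidx (kk + x), mone M) : FF)).
  intros q [i [q0 [Hi Hr]]]. pose proof (relof_RR Hi) as HR.
  destruct q0 as [x s y t|x s c]; unfold relA in Hr; simpl in Hr.
  - subst q. cbv beta iota delta [sat_eqn]. rewrite !PP_qact. simpl. rewrite !mone_l.
    apply PP_rel. exact HR.
  - destruct Hr as [a [-> Ha]]. cbv beta iota delta [sat_eqn].
    transitivity (qcls (cg Rel) ((fidx i, mone M) : FF)); [|symmetry; exact Ha].
    rewrite PP_qact. simpl. rewrite mone_l. apply PP_rel. exact HR.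
Qed.

End Pres.

Lemma c3_to_c1 (M : monoid) :
  (forall A : preact M, is_act A -> fg_sub_fp A -> abs_pure (A1 A)) ->
  forall C : preact M, is_act C -> almost_pure C -> abs_pure C.
Proof.
  intros c3 C HC Hap Sg [l Hl] [D [HD [e [He [Hem [f0 Hf0]]]]]].
  assert (Hf0' : forall q, In q l -> sat_eqn e f0 q) by (intros q Hq; apply Hf0, Hl; auto).
  set (AA0 := AA l).
  assert (HAA : is_act AA0) by apply AA_act.
  set (phi := phiA HD Hem Hf0').
  assert (Hpm : is_morph phi) by (apply phiA_morph; auto).
  assert (Hps : forall a, e (phi a) = chib e f0 (proj1_sig a)) by (intro a; apply phiA_spec).
  destruct (ap_inh HC Hap) as [c0 _].
  destruct (@ext_A1 M AA0 C phi c0 HAA HC Hap Hpm) as [psi [Hpsi Hpe]].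
  pose proof (c3 AA0 HAA (AA_fgfp l)) as Habs.
  assert (Hemb : is_morph (fun a : AA0 => emb (n := Some 1) (j := 0) a)).
  { intros a s. apply (@emb_morph M (Some 1) AA0 HAA 0). }
  destruct (Habs _ (finite_sysmap (fun x => x) _ (SgA_fin l))
              (T1 (Aclos_act _ HAA) Hemb (SgA_cons l))) as [fA HfA].
  apply sm1 in HfA.
  exists (fun x => psi (fA x)). intros q Hq. apply Hl in Hq.
  destruct (In_nth_error _ _ Hq) as [i Hi].
  destruct q as [x s y t|x s c]; cbv beta iota delta [sat_eqn].
  - assert (H := HfA (EqVV x s y t) (ex_intro _ i (ex_intro _ _ (conj Hi eq_refl)))).
    cbv beta iota delta [sat_eqn] in H. rewrite <- !Hpsi. congruence.
  - assert (Hs : slot l i) by (exists x, s, c; auto).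
    assert (H := HfA (EqVC x s (mkgen Hs))
                  (ex_intro _ i (ex_intro _ _ (conj Hi (ex_intro _ (mkgen Hs) (conj eq_refl eq_refl)))))).
    cbv beta iota delta [sat_eqn] in H. rewrite <- Hpsi, H, Hpe.
    apply He. rewrite Hps. cbn [proj1_sig mkgen]. rewrite chib_qcls by auto. unfold chi. cbn [fst snd].
    rewrite fidx_val. unfold base. rewrite Hi. apply (proj1 HD).
    assert (i < kk l) by (apply nth_error_Some; unfold kk in *; congruence). unfold nn; lia.
Qed.

Theorem mainTheorem17 (S : monoid) :
  let c1 := forall A : preact S, is_act A -> almost_pure A -> abs_pure A in
  let c2 := forall A : preact S, is_act A -> abs_pure (A1 A) in
  let c3 := forall A : preact S, is_act A -> fg_sub_fp A -> abs_pure (A1 A) in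
  let c4 := forall A : preact S, is_act A -> A1_retract A in
  let c5 := forall A : preact S, is_act A -> fg_sub_fp A -> A1_retract A in
  (c1 <-> c2) /\ (c1 <-> c3) /\ (c1 <-> c4) /\ (c1 <-> c5).
Proof.
  intros c1 c2 c3 c4 c5.
  assert (H12 : c1 -> c2).
  { intros H A HA. apply H. unfold A1; apply Aclos_act; auto. apply A1_ap; auto. }
  assert (H21 : c2 -> c1).
  { intros H A HA Hap. exact (c2_to_c1 HA Hap (H A HA)). }
  assert (H31 : c3 -> c1).
  { intros H A HA Hap. exact (c3_to_c1 H HA Hap). }
  assert (H24 : c2 -> c4).
  { intros H A HA. exact (abs_to_retract HA (H A HA)). }
  assert (H53 : c5 -> c3).
  { intros H A HA Hf. exact (retract_to_abs HA (H A HA Hf)). }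
  split; [|split; [|split]]; split; intro H.
  - auto.
  - auto.
  - intros A HA _. exact (H12 H A HA).
  - auto.
  - apply H24, H12; auto.
  - apply H31, H53. intros A HA _. exact (H A HA).
  - intros A HA _. exact (H24 (H12 H) A HA).
  - apply H31, H53; auto.
Qed.
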